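(* For all $L>0$, $\delta t>0$ and $J\ge2$ with $\delta t/\delta x^2\le1/2$, and all $\ell\in\{0,\dots,J-1\}$, $$|1+\delta t\,\lambda_\ell|\le \exp\Big(-\frac{\delta t}{\delta x^2}\sin^2\Big(\frac{\ell\pi}{J}\Big)\Big).$$
   Context: $\delta x=L/(J-1)$ and $\lambda_\ell=-\frac{4}{\delta x^2}\sin^2\big(\frac{\ell\pi}{2J}\big)$, $0\le\ell\le J-1$ (these are the eigenvalues of the Neumann finite-difference matrix $\mathsf P_\delta=\frac1{\delta x^2}\,\mathrm{tridiag}$ with diagonal $(-1,-2,\dots,-2,-1)$ and off-diagonals $1$). *)

(* Defs.v *)
From Stdlib Require Import Reals.
Open Scope R_scope.

Definition dx (L : R) (J : nat) : R := L / (INR J - 1).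

(* Eigenvalues of the Neumann finite-difference matrix P_delta:
   lambda_l = -(4 / dx^2) * sin^2 (l * PI / (2 J)). *)
Definition lambda (L : R) (J l : nat) : R :=
  - (4 / (dx L J) ^ 2) * (sin (INR l * PI / (2 * INR J))) ^ 2.

(* Main.v *)
Require Import Defs.
From Stdlib Require Import Reals Lra Psatz.
Open Scope R_scope.

Lemma key (a s : R) : 0 <= s <= 1 -> 0 <= a <= 2 * s ->
  Rabs (1 - a) <= 1 - a * (1 - s).
Proof.
  intros Hs Ha. unfold Rabs; destruct (Rcase_abs (1 - a)); nra.
Qed.

Theorem proposition3p2 (L dt : R) (J l : nat) :
  0 < L -> 0 < dt -> (2 <= J)%nat ->
  dt / (dx L J) ^ 2 <= 1 / 2 ->
  (l <= J - 1)%nat ->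
  Rabs (1 + dt * lambda L J l)
    <= exp (- (dt / (dx L J) ^ 2) * (sin (INR l * PI / INR J)) ^ 2).
Proof.
  intros HL Hdt HJ Hr Hl.
  assert (HJR : 2 <= INR J) by (apply (le_INR 2); exact HJ).
  set (r := dt / (dx L J) ^ 2) in *.
  assert (Hr0 : 0 <= r).
  { unfold r. apply Rmult_le_pos; [lra|]. apply Rlt_le, Rinv_0_lt_compat.
    unfold dx. apply pow_lt. apply Rdiv_lt_0_compat; lra. }
  set (th := INR l * PI / (2 * INR J)).
  assert (Heq : INR l * PI / INR J = 2 * th) by (unfold th; field; lra).
  rewrite Heq, sin_2a.
  assert (Hc : cos th ^ 2 = 1 - sin th ^ 2).
  { pose proof (sin2_cos2 th). unfold Rsqr in *. lra. }
  set (s := sin th ^ 2).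
  assert (Hs : 0 <= s <= 1).
  { unfold s. pose proof (sin2_cos2 th). unfold Rsqr in *. nra. }
  assert (E1 : 1 + dt * lambda L J l = 1 - 4 * r * s).
  { unfold lambda, r, s. fold th. unfold Rdiv. ring. }
  assert (E2 : - r * (2 * sin th * cos th) ^ 2 = - (4 * r * s) * (1 - s)).
  { replace ((2 * sin th * cos th) ^ 2) with (4 * sin th ^ 2 * cos th ^ 2) by ring.
    rewrite Hc. unfold s. ring. }
  rewrite E1, E2.
  eapply Rle_trans; [apply (key (4 * r * s) s); nra|].
  pose proof (exp_ineq1_le (- (4 * r * s) * (1 - s))). lra.
Qed.
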